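(* For every BST $T$ and every set $F$ of nodes of $T$ containing the root of $T$, the intervals in the extended hand $E(T,F)$ are pairwise disjoint.
   Context: Let $T$ be a BST and $F$ a set of nodes (fingers) including the root. $S(T,F)$ is the Steiner tree of $F$ in $T$ (the minimal connected subtree containing $F$). The set of pseudofingers $P(T,F)$ consists of $F$ together with all nodes of degree $3$ in $S(T,F)$. For pseudofingers $x,y$ with $x$ an ancestor of $y$ such that the path between them contains no other pseudofinger, the tendon $\tau_{x,y}$ is the set of nodes strictly between $x$ and $y$ on this path. Its half tendons are $\tau^{<}_{x,y}=\{z\in\tau_{x,y}: z<y\}$ and $\tau^{>}_{x,y}=\{z\in\tau_{x,y}:z>y\}$; $H(T,F)$ is the set of all (nonempty) half tendons. A half tendon $\tau$ is identified with the interval $[\min\tau,\max\tau]$ of keys and a pseudofinger $f$ with $[f,f]$. The extended hand is $E(T,F)=P(T,F)\cup H(T,F)$, viewed as a set of intervals. *)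

(* Defs.v *)
From mathcomp Require Import all_boot.
Set Implicit Arguments. Unset Strict Implicit. Unset Printing Implicit Defensive.

(* Binary trees with natural-number keys; a node is identified with its key
   (keys of a BST are pairwise distinct). *)
Inductive tree := Leaf | Node of tree & nat & tree.

Fixpoint nodes (t : tree) : seq nat :=
  match t with Leaf => [::] | Node l k r => nodes l ++ k :: nodes r end.

Fixpoint bst (t : tree) : bool :=
  match t with
  | Leaf => true
  | Node l k r => [&& bst l, bst r, all (fun x => x < k) (nodes l)
                    & all (fun x => k < x) (nodes r)]
  end.

Definition troot (t : tree) : option nat :=
  match t with Leaf => None | Node _ k _ => Some k end.

Fixpoint sub (t : tree) (u : nat) : tree :=
  match t with
  | Leaf => Leaf
  | Node l k r =>
      if k == u then t else
      match sub l u with Leaf => sub r u | s => s end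
  end.

Definition anc (t : tree) (u v : nat) : bool :=
  (u \in nodes t) && (v \in nodes (sub t u)).
Definition sanc (t : tree) (u v : nat) : bool := anc t u v && (u != v).

Definition children (t : tree) (u : nat) : seq nat :=
  match sub t u with Leaf => [::] | Node l _ r => pmap id [:: troot l; troot r] end.

Definition adj (t : tree) (u v : nat) : bool :=
  (u \in children t v) || (v \in children t u).

(* z lies on the tree path between x and y: z is an ancestor of x or of y,
   and a descendant of every common ancestor of x and y *)
Definition on_path (t : tree) (x y z : nat) : bool :=
  (anc t z x || anc t z y) &&
  all (fun w => (anc t w x && anc t w y) ==> anc t w z) (nodes t).

(* membership in the Steiner tree S(T,F): union of the paths between fingers *)
Definition steiner (t : tree) (F : seq nat) (z : nat) : bool :=
  has (fun x => has (fun y => on_path t x y z) F) F.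

Definition degS (t : tree) (F : seq nat) (v : nat) : nat :=
  count (fun u => steiner t F u && adj t u v) (nodes t).

Definition pseudo (t : tree) (F : seq nat) (v : nat) : bool :=
  (v \in nodes t) &&
  ((v \in F) || (steiner t F v && (degS t F v == 3))).

Definition tendon_ok (t : tree) (F : seq nat) (x y : nat) : bool :=
  [&& pseudo t F x, pseudo t F y, sanc t x y &
      all (fun z => (sanc t x z && sanc t z y) ==> ~~ pseudo t F z) (nodes t)].

Definition tendon (t : tree) (x y : nat) : seq nat :=
  [seq z <- nodes t | sanc t x z && sanc t z y].

(* half tendons: b = true gives tau^<_{x,y}, b = false gives tau^>_{x,y} *)
Definition half (t : tree) (x y : nat) (b : bool) : seq nat :=
  [seq z <- tendon t x y | if b then z < y else y < z].

Inductive hand_elt := PF of nat | HT of nat & nat & bool.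

Definition in_hand (t : tree) (F : seq nat) (e : hand_elt) : bool :=
  match e with
  | PF f => pseudo t F f
  | HT x y b => tendon_ok t F x y && (half t x y b != [::])
  end.

Definition elt_nodes (t : tree) (e : hand_elt) : seq nat :=
  match e with PF f => [:: f] | HT x y b => half t x y b end.

Definition interval (t : tree) (e : hand_elt) : nat * nat :=
  let s := elt_nodes t e in (foldr minn (head 0 s) s, foldr maxn 0 s).

Definition disjoint_iv (a b : nat * nat) : bool := (a.2 < b.1) || (b.2 < a.1).

(* Main.v *)
Require Import Defs.
From mathcomp Require Import all_boot.
From mathcomp Require Import all_boot zify.
Set Implicit Arguments. Unset Strict Implicit. Unset Printing Implicit Defensive.


Lemma lt_asym a b : a < b -> b < a -> False. Proof. lia. Qed.
Lemma btw_lt a b c k : a < k -> b < k -> (a <= c <= b) || (b <= c <= a) -> c < k. Proof. lia. Qed.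
Lemma btw_gt a b c k : k < a -> k < b -> (a <= c <= b) || (b <= c <= a) -> k < c. Proof. lia. Qed.
Lemma eqlt2 u v w : v < u -> w < u -> (u < v) = (u < w). Proof. lia. Qed.
Lemma eqgt2 u v w : u < v -> u < w -> (u < v) = (u < w). Proof. lia. Qed.

Lemma bst_lt (l r : tree) k x : bst (Node l k r) -> x \in nodes l -> x < k.
Proof. by case/and4P=> _ _ /allP H _ /H. Qed.
Lemma bst_gt (l r : tree) k x : bst (Node l k r) -> x \in nodes r -> k < x.
Proof. by case/and4P=> _ _ _ /allP H /H. Qed.
Lemma bst_l (l r : tree) k : bst (Node l k r) -> bst l.
Proof. by case/and4P. Qed.
Lemma bst_r (l r : tree) k : bst (Node l k r) -> bst r.
Proof. by case/and4P. Qed.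

Lemma nodesN l k r x : (x \in nodes (Node l k r)) = [|| x == k, x \in nodes l | x \in nodes r].
Proof. by rewrite /= mem_cat in_cons; case: (x == k); case: (x \in nodes l). Qed.

Lemma bst_uniq t : bst t -> uniq (nodes t).
Proof.
elim: t => //= l IHl k r IHr H.
rewrite cat_uniq /= IHl ?(bst_l H) // IHr ?(bst_r H) // andbT.
rewrite negb_or /= -andbA; apply/and3P; split.
- by apply/negP=> kl; move: (bst_lt H kl); rewrite ltnn.
- apply/hasP=> -[x xr xl].
  by apply: lt_asym (bst_gt H xr) (bst_lt H xl).
- by apply/negP=> kr; move: (bst_gt H kr); rewrite ltnn.
Qed.

Lemma sub_notin t u : u \notin nodes t -> sub t u = Leaf.
Proof.
elim: t => // l IHl k r IHr; rewrite nodesN !negb_or => /and3P[uk ul ur] /=.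
by rewrite eq_sym (negbTE uk) IHl // IHr.
Qed.

Lemma sub_in t u : u \in nodes t -> exists l r, sub t u = Node l u r.
Proof.
elim: t => //= l IHl k r IHr; rewrite mem_cat in_cons => Hu.
case: (k =P u) => [->|ku]; first by exists l, r.
move: Hu; case/orP=> [/IHl [a [b ->]]|/orP[/eqP/esym//|ur]]; first by exists a, b.
have [ul|ul] := boolP (u \in nodes l); first by case: (IHl ul)=> a [b ->]; exists a, b.
by rewrite sub_notin //; apply: IHr.
Qed.

Lemma sub_Node l k r u : u != k ->
  sub (Node l k r) u = if u \in nodes l then sub l u else sub r u.
Proof.
move=> uk /=; rewrite eq_sym (negbTE uk).
case: ifP => ul; last by rewrite sub_notin ?ul.
by case: (sub_in ul) => a [b ->].
Qed.

Lemma sub_nodes t u : {subset nodes (sub t u) <= nodes t}.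
Proof.
elim: t => //= l IHl k r IHr x.
case: eqP => // _; case E: (sub l u) => [|a b c].
  by move/IHr; rewrite mem_cat in_cons => ->; rewrite !orbT.
by rewrite -E => /IHl; rewrite mem_cat => ->.
Qed.

Lemma bst_sub t u : bst t -> bst (sub t u).
Proof.
elim: t => //= l IHl k r IHr H.
case: eqP => // _; case E: (sub l u) => [|a b c].
  exact: IHr (bst_r H).
by rewrite -E; apply: IHl (bst_l H).
Qed.

Lemma sub_self t u : u \in nodes t -> u \in nodes (sub t u).
Proof. by case/sub_in=> a [b ->]; rewrite nodesN eqxx. Qed.

Lemma ancE l k r u v : bst (Node l k r) ->
  anc (Node l k r) u v = if u == k then v \in nodes (Node l k r)
                         else anc l u v || anc r u v.
Proof.
move=> H; rewrite /anc.
case: eqP => [->|/eqP uk]; first by rewrite /= eqxx nodesN eqxx.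
rewrite sub_Node // nodesN (negbTE uk) /=.
case: ifP => ul /=.
  have ur : u \notin nodes r by apply/negP=> ur; apply: lt_asym (bst_gt H ur) (bst_lt H ul).
  by rewrite (negbTE ur) /= orbF.
by [].
Qed.

Lemma anc_in t u v : anc t u v -> (u \in nodes t) && (v \in nodes t).
Proof. by case/andP=> -> /sub_nodes ->. Qed.

Lemma anc_refl t u : u \in nodes t -> anc t u u.
Proof. by move=> H; rewrite /anc H sub_self. Qed.

Lemma sub_sub t u v : bst t -> v \in nodes (sub t u) -> sub (sub t u) v = sub t v.
Proof.
elim: t => // l IHl k r IHr H.
have Hl := bst_l H; have Hr := bst_r H.
have [->|ku] := eqVneq u k.
  by have -> : sub (Node l k r) k = Node l k r by rewrite /= eqxx.
rewrite (@sub_Node l k r _ ku); case: ifP => ul vs.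
  have vl' := sub_nodes vs.
  have vk : v != k by apply/eqP=> e; move: (bst_lt H vl'); rewrite e ltnn.
  by rewrite (@sub_Node l k r _ vk) vl' (IHl Hl vs).
have vr' := sub_nodes vs.
have vk : v != k by apply/eqP=> e; move: (bst_gt H vr'); rewrite e ltnn.
have vl : v \notin nodes l by apply/negP=> vl; apply: lt_asym (bst_gt H vr') (bst_lt H vl).
by rewrite (@sub_Node l k r _ vk) (negbTE vl) (IHr Hr vs).
Qed.

Lemma anc_trans t u v w : bst t -> anc t u v -> anc t v w -> anc t u w.
Proof.
move=> H /andP[ut vs] /andP[vt ws]; rewrite /anc ut /=.
by rewrite -(sub_sub H vs) in ws; apply: sub_nodes ws.
Qed.

Lemma ancL l k r u v : bst (Node l k r) -> anc l u v -> anc (Node l k r) u v.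
Proof.
move=> H a; rewrite ancE //; case: eqP => [e|_]; last by rewrite a.
by move: (anc_in a) => /andP[ul _]; move: (bst_lt H ul); rewrite e ltnn.
Qed.
Lemma ancR l k r u v : bst (Node l k r) -> anc r u v -> anc (Node l k r) u v.
Proof.
move=> H a; rewrite ancE //; case: eqP => [e|_]; last by rewrite a orbT.
by move: (anc_in a) => /andP[ul _]; move: (bst_gt H ul); rewrite e ltnn.
Qed.

Lemma anc_top l k r v : v \in nodes (Node l k r) -> anc (Node l k r) k v.
Proof. by move=> H; rewrite /anc /= eqxx H nodesN eqxx. Qed.

Lemma anc_to_top l k r w : bst (Node l k r) -> anc (Node l k r) w k -> w = k.
Proof.
move=> H; rewrite ancE //; case: eqP => // _ /orP[]/anc_in/andP[_ kk].
  by move: (bst_lt H kk); rewrite ltnn.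
by move: (bst_gt H kk); rewrite ltnn.
Qed.

Lemma anc_antisym t u v : bst t -> anc t u v -> anc t v u -> u = v.
Proof.
elim: t => [|l IHl k r IHr] H; first by case/andP.
have Hl := bst_l H; have Hr := bst_r H.
have [->|uk] := eqVneq u k; first by move=> _ /(anc_to_top H).
have [->|vk] := eqVneq v k; first by move/(anc_to_top H).
rewrite !ancE // (negbTE uk) (negbTE vk).
case/orP=> a1 /orP[] a2; try exact: IHl; try exact: IHr.
- by move: (anc_in a1) (anc_in a2) => /andP[ul _] /andP[_ ur]; case: (lt_asym (bst_lt H ul) (bst_gt H ur)).
- by move: (anc_in a1) (anc_in a2) => /andP[ul _] /andP[_ ur]; case: (lt_asym (bst_gt H ul) (bst_lt H ur)).
Qed.

Lemma anc_total t u v w : bst t -> anc t u w -> anc t v w -> anc t u v || anc t v u.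
Proof.
elim: t => [|l IHl k r IHr] H; first by case/andP.
have Hl := bst_l H; have Hr := bst_r H.
have [->|uk] := eqVneq u k.
  by move=> _ /anc_in/andP[vt _]; rewrite anc_top.
have [->|vk] := eqVneq v k.
  by move=> /anc_in/andP[ut _] _; rewrite anc_top ?orbT.
rewrite !ancE // (negbTE uk) (negbTE vk).
case/orP=> a1 /orP[] a2.
- by case/orP: (IHl Hl a1 a2) => ->; rewrite ?orbT.
- by move: (anc_in a1) (anc_in a2) => /andP[_ wl] /andP[_ wr]; case: (lt_asym (bst_lt H wl) (bst_gt H wr)).
- by move: (anc_in a1) (anc_in a2) => /andP[_ wl] /andP[_ wr]; case: (lt_asym (bst_gt H wl) (bst_lt H wr)).
- by case/orP: (IHr Hr a1 a2) => ->; rewrite ?orbT.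
Qed.

Lemma anc_contig t a b c : bst t -> anc t a b -> (a <= c <= b) || (b <= c <= a) ->
  c \in nodes t -> anc t a c.
Proof.
elim: t => [|l IHl k r IHr] H; first by case/andP.
have Hl := bst_l H; have Hr := bst_r H.
rewrite !ancE //; case: eqP => // _.
case/orP=> ab; move: (anc_in ab) => /andP[al bl] cb; rewrite nodesN => /or3P[/eqP ck|cl|cr].
- by move: (btw_lt (bst_lt H al) (bst_lt H bl) cb); rewrite ck ltnn.
- by rewrite (IHl Hl ab cb cl).
- by case: (lt_asym (btw_lt (bst_lt H al) (bst_lt H bl) cb) (bst_gt H cr)).
- by move: (btw_gt (bst_gt H al) (bst_gt H bl) cb); rewrite ck ltnn.
- by case: (lt_asym (btw_gt (bst_gt H al) (bst_gt H bl) cb) (bst_lt H cl)).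
- by rewrite (IHr Hr ab cb cr) orbT.
Qed.

Lemma anc_side t u v w : bst t -> anc t u v -> u != v -> anc t v w -> (u < v) = (u < w).
Proof.
elim: t => [|l IHl k r IHr] H; first by case/andP.
have Hl := bst_l H; have Hr := bst_r H.
have [->|uk] := eqVneq u k.
  move=> _ vk; have [e|vk'] := eqVneq v k; first by rewrite e eqxx in vk.
  rewrite ancE // (negbTE vk') => /orP[] a; move: (anc_in a) => /andP[vl wl].
    exact: eqlt2 (bst_lt H vl) (bst_lt H wl).
  exact: eqgt2 (bst_gt H vl) (bst_gt H wl).
rewrite ancE // (negbTE uk) => /orP[] a uv; move: (anc_in a) => /andP[ul vl].
  have vk : v != k by apply/eqP=> e; move: (bst_lt H vl); rewrite e ltnn.
  rewrite ancE // (negbTE vk) => /orP[] b.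
    exact: IHl.
  by move: (anc_in b) => /andP[vr _]; case: (lt_asym (bst_lt H vl) (bst_gt H vr)).
have vk : v != k by apply/eqP=> e; move: (bst_gt H vl); rewrite e ltnn.
rewrite ancE // (negbTE vk) => /orP[] b.
  by move: (anc_in b) => /andP[vr _]; case: (lt_asym (bst_gt H vl) (bst_lt H vr)).
exact: IHr.
Qed.

Lemma sub_Some t z l w r : sub t z = Node l w r -> (z \in nodes t) /\ w = z.
Proof.
move=> E; have zt : z \in nodes t by case: (boolP (z \in nodes t)) => // nz; move: (sub_notin nz); rewrite E.
by split => //; case: (sub_in zt) => a [b]; rewrite E => -[].
Qed.

Lemma anc_subtree_l t u l r w v : bst t -> sub t u = Node l u r -> w \in nodes l ->
  anc t w v = anc l w v.
Proof.
move=> H E wl.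
have Hs : bst (Node l u r) by rewrite -E; apply: bst_sub.
have wk : w != u by apply/eqP=> e; move: (bst_lt Hs wl); rewrite e ltnn.
have ws : w \in nodes (sub t u) by rewrite E nodesN wl orbT.
rewrite /anc (sub_nodes ws) wl -(sub_sub H ws) E (@sub_Node l u r w wk) wl.
by [].
Qed.

Lemma anc_subtree_r t u l r w v : bst t -> sub t u = Node l u r -> w \in nodes r ->
  anc t w v = anc r w v.
Proof.
move=> H E wr.
have Hs : bst (Node l u r) by rewrite -E; apply: bst_sub.
have wk : w != u by apply/eqP=> e; move: (bst_gt Hs wr); rewrite e ltnn.
have wl : w \notin nodes l by apply/negP=> wl; case: (lt_asym (bst_gt Hs wr) (bst_lt Hs wl)).
have ws : w \in nodes (sub t u) by rewrite E nodesN wr !orbT.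
by rewrite /anc (sub_nodes ws) wr -(sub_sub H ws) E (@sub_Node l u r w wk) (negbTE wl).
Qed.

Lemma anc_subtree_top t u l r v : sub t u = Node l u r -> anc t u v = (v \in nodes (Node l u r)).
Proof. by move=> E; rewrite /anc E; case: (sub_Some E) => -> _. Qed.

Lemma branch s k y : bst s -> k \in nodes s -> y \in nodes s ->
  anc s k y \/ anc s y k \/ exists z l r, sub s z = Node l z r /\
     ((k \in nodes l) && (y \in nodes r) \/ (k \in nodes r) && (y \in nodes l)).
Proof.
elim: s => // l IHl c r IHr H.
have Hl := bst_l H; have Hr := bst_r H.
have [->|kc] := eqVneq k c; first by move=> _ yt; left; apply: anc_top.
have [->|yc] := eqVneq y c; first by move=> kt _; right; left; apply: anc_top.
rewrite !nodesN (negbTE kc) (negbTE yc) !orFb => /orP[] kl /orP[] yl.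
- case: (IHl Hl kl yl) => [a|[a|[z [a [b [E h]]]]]].
  + by left; apply: ancL.
  + by right; left; apply: ancL.
  + right; right; exists z, a, b; split => //.
    case: (sub_Some E) => zl _.
    have zc : z != c by apply/eqP=> e; move: (bst_lt H zl); rewrite e ltnn.
    by rewrite (@sub_Node l c r z zc) zl.
- by right; right; exists c, l, r; split; [rewrite /= eqxx | left; rewrite kl yl].
- by right; right; exists c, l, r; split; [rewrite /= eqxx | right; rewrite kl yl].
- case: (IHr Hr kl yl) => [a|[a|[z [a [b [E h]]]]]].
  + by left; apply: ancR.
  + by right; left; apply: ancR.
  + right; right; exists z, a, b; split => //.
    case: (sub_Some E) => zl _.
    have zc : z != c by apply/eqP=> e; move: (bst_gt H zl); rewrite e ltnn.
    have zl' : z \notin nodes l by apply/negP=> zl'; case: (lt_asym (bst_gt H zl) (bst_lt H zl')).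
    by rewrite (@sub_Node l c r z zc) (negbTE zl').
Qed.

Lemma anc_sub_anc t a u v : bst t -> a \in nodes t -> anc (sub t a) u v -> anc t u v.
Proof.
move=> H aT /andP[us vs]; rewrite /anc (sub_nodes us) /=.
by rewrite -(sub_sub H us).
Qed.

Lemma branchT t a k y : bst t -> anc t a k -> anc t a y ->
  anc t k y \/ anc t y k \/ exists z l r, anc t a z /\ sub t z = Node l z r /\
     ((k \in nodes l) && (y \in nodes r) \/ (k \in nodes r) && (y \in nodes l)).
Proof.
move=> H /andP[aT ks] /andP[_ ys].
case: (branch (bst_sub a H) ks ys) => [h|[h|[z [l [r [E h]]]]]].
- by left; apply: anc_sub_anc h.
- by right; left; apply: anc_sub_anc h.
- right; right; exists z, l, r; case: (sub_Some E) => zs _.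
  by rewrite /anc aT zs (sub_sub H zs) in E *.
Qed.

Lemma children_E t u l r : sub t u = Node l u r -> children t u = pmap id [:: troot l; troot r].
Proof. by move=> E; rewrite /children E. Qed.

Lemma children_anc t u c : c \in children t u ->
  exists l r, sub t u = Node l u r /\ (Some c = troot l \/ Some c = troot r).
Proof.
rewrite /children; case E: (sub t u) => [|l w r] // H.
case: (sub_Some E) => _ ew; subst w; exists l, r; split => //.
move: H; case: l {E} => [|l1 a l2]; case: r => [|r1 b r2] //=; rewrite ?in_cons ?in_nil ?orbF.
- by move/eqP->; right.
- by move/eqP->; left.
- by case/orP=> /eqP->; [left|right].
Qed.

Lemma parent_imm t u c : bst t -> c \in children t u ->
  [/\ u != c, anc t u c & forall w, anc t u w -> anc t w c -> w = u \/ w = c].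
Proof.
move=> H /children_anc [l [r [E h]]].
have Hs : bst (Node l u r) by rewrite -E; apply: bst_sub.
have Hl := bst_l Hs; have Hr := bst_r Hs.
case: h => h.
- case: l h E Hs Hl => [|l1 a l2] // h E Hs Hl; move: h => /= [ac]; subst a.
  have cl : c \in nodes (Node l1 c l2) by rewrite nodesN eqxx.
  split.
  + by apply/eqP=> e; move: (bst_lt Hs cl); rewrite e ltnn.
  + by rewrite (anc_subtree_top _ E) nodesN cl orbT.
  move=> w; rewrite (anc_subtree_top _ E) nodesN => /or3P[/eqP->|wl|wr]; first by left.
  * rewrite (anc_subtree_l _ H E wl) => a; right; apply: anc_antisym Hl a _.
    exact: anc_top.
  * rewrite (anc_subtree_r _ H E wr) => /anc_in/andP[_ cr].
    by case: (lt_asym (bst_gt Hs cr) (bst_lt Hs cl)).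
- case: r h E Hs Hr => [|r1 a r2] // h E Hs Hr; move: h => /= [ac]; subst a.
  have cr : c \in nodes (Node r1 c r2) by rewrite nodesN eqxx.
  split.
  + by apply/eqP=> e; move: (bst_gt Hs cr); rewrite e ltnn.
  + by rewrite (anc_subtree_top _ E) nodesN cr !orbT.
  move=> w; rewrite (anc_subtree_top _ E) nodesN => /or3P[/eqP->|wl|wr]; first by left.
  * rewrite (anc_subtree_l _ H E wl) => /anc_in/andP[_ cl].
    by case: (lt_asym (bst_gt Hs cr) (bst_lt Hs cl)).
  * rewrite (anc_subtree_r _ H E wr) => a; right; apply: anc_antisym Hr a _.
    exact: anc_top.
Qed.

Lemma parent_uniq t u u' c : bst t -> c \in children t u -> c \in children t u' -> u = u'.
Proof.
move=> H cu cu'.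
case: (parent_imm H cu) => nu au imu; case: (parent_imm H cu') => nu' au' imu'.
case/orP: (anc_total H au au') => a.
  by case: (imu _ a au') => // e; rewrite e eqxx in nu'.
by case: (imu' _ a au) => // e; rewrite e eqxx in nu.
Qed.

Lemma parent_exists t r z : bst t -> troot t = Some r -> z \in nodes t -> z != r ->
  exists p, z \in children t p.
Proof.
elim: t r => // l IHl k r0 IHr0 r H [<-] {r}.
have Hl := bst_l H; have Hr := bst_r H.
rewrite nodesN => /or3P[/eqP->|zl|zr]; first by rewrite eqxx.
- move=> zk; case: l IHl H Hl zl => [|l1 a l2] // IHl H Hl zl.
  have [za|za] := eqVneq z a.
    exists k; rewrite (@children_E _ k (Node l1 a l2) r0); first by rewrite za /= in_cons eqxx.
    by rewrite /= eqxx.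
  case: (IHl a Hl erefl zl za) => p zp; exists p.
  case: (children_anc zp) => l' [r' [E _]]; case: (sub_Some E) => pl _.
  have pk : p != k by apply/eqP=> e; move: (bst_lt H pl); rewrite e ltnn.
  by rewrite /children (@sub_Node _ k r0 p pk) pl.
- move=> zk; case: r0 IHr0 H Hr zr => [|r1 a r2] // IHr H Hr zr.
  have [za|za] := eqVneq z a.
    exists k; rewrite (@children_E _ k l (Node r1 a r2)); last by rewrite /= eqxx.
    by rewrite za; case: (troot l) => [?|] /=; rewrite !in_cons eqxx ?orbT.
  case: (IHr a Hr erefl zr za) => p zp; exists p.
  case: (children_anc zp) => l' [r' [E _]]; case: (sub_Some E) => pr _.
  have pk : p != k by apply/eqP=> e; move: (bst_gt H pr); rewrite e ltnn.
  have pl : p \notin nodes l by apply/negP=> pl; case: (lt_asym (bst_gt H pr) (bst_lt H pl)).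
  by rewrite /children (@sub_Node l k _ p pk) (negbTE pl).
Qed.

Lemma steinerE t F r k : bst t -> troot t = Some r -> r \in F ->
  steiner t F k = has (anc t k) F.
Proof.
move=> H tr rF; apply/idP/idP.
  case/hasP=> x xF /hasP[y yF /andP[/orP[] a _]]; apply/hasP; [by exists x | by exists y].
case/hasP=> f fF a; apply/hasP; exists r => //; apply/hasP; exists f => //.
rewrite /on_path a orbT /=; apply/allP=> w wt; apply/implyP=> /andP[wr _].
case: t H tr wt wr a => // l k0 r0 H [<-] wt wr a.
rewrite (anc_to_top H wr); apply: anc_top.
by case/andP: (anc_in a).
Qed.

Lemma count_mem_uniq (s u : seq nat) : uniq u -> uniq s -> {subset s <= u} ->
  count (mem s) u = size s.
Proof.
move=> uu us su; rewrite -size_filter; apply: perm_size; apply: uniq_perm.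
- exact: filter_uniq.
- exact: us.
- by move=> x; rewrite mem_filter andb_idr //; apply: su.
Qed.

Lemma deg3 t F z l1 cl l2 r1 cr r2 p : bst t ->
  (forall u, steiner t F u = has (anc t u) F) ->
  sub t z = Node (Node l1 cl l2) z (Node r1 cr r2) -> z \in children t p ->
  has (anc t cl) F -> has (anc t cr) F -> has (anc t p) F -> degS t F z = 3.
Proof.
move=> H SE E zp Hcl Hcr Hp.
have Hs : bst (Node (Node l1 cl l2) z (Node r1 cr r2)) by rewrite -E; apply: bst_sub.
have clz : cl < z by apply: (bst_lt Hs); rewrite nodesN eqxx.
have zcr : z < cr by apply: (bst_gt Hs); rewrite nodesN eqxx.
case: (parent_imm H zp) => pz apz _.
have azcl : anc t z cl by rewrite (anc_subtree_top _ E) !nodesN (eqxx cl) !orbT.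
have azcr : anc t z cr by rewrite (anc_subtree_top _ E) !nodesN (eqxx cr) !orbT.
have pt : p \in nodes t by case/andP: (anc_in apz).
have clt : cl \in nodes t by case/andP: (anc_in azcl).
have crt : cr \in nodes t by case/andP: (anc_in azcr).
rewrite /degS (@eq_in_count _ _ (mem [:: cl; cr; p])).
  apply: count_mem_uniq; first exact: bst_uniq.
    rewrite /= !in_cons !in_nil !orbF andbT; apply/andP; split.
      apply/norP; split; first by apply/eqP=> e; move: clz zcr; rewrite e => a b; case: (lt_asym a b).
      apply/eqP=> e; have := anc_antisym H azcl; rewrite e => /(_ apz) e2.
      by move: clz; rewrite e -e2 ltnn.
    apply/eqP=> e; have := anc_antisym H azcr; rewrite e => /(_ apz) e2.
    by move: zcr; rewrite e -e2 ltnn.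
  by move=> x; rewrite !in_cons in_nil orbF => /or3P[] /eqP->.
move=> u ut; rewrite /adj SE (children_E E) /=.
have -> : (z \in children t u) = (u == p).
  by apply/idP/eqP=> [zu|->//]; apply: parent_uniq H zu zp.
rewrite !in_cons in_nil orbF.
have [->|_] := eqVneq u cl; first by rewrite Hcl.
have [->|_] := eqVneq u cr; first by rewrite Hcr.
have [->|_] := eqVneq u p; first by rewrite Hp.
by rewrite andbF.
Qed.

Lemma chain_eq t x a k : bst t -> anc t x a -> anc t a k -> x = k -> x = a /\ a = k.
Proof.
move=> H xa ak e; subst k.
by have e := anc_antisym H xa ak; split.
Qed.

Lemma pseudo_S t F r v : bst t -> troot t = Some r -> r \in F ->
  pseudo t F v -> has (anc t v) F.
Proof.
move=> H tr rF /andP[vt /orP[vF|/andP[]]].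
  by apply/hasP; exists v => //; apply: anc_refl.
by rewrite (steinerE _ H tr rF).
Qed.

Lemma branch_pseudo t F r z w l R a b : bst t -> troot t = Some r -> r \in F ->
  sub t z = Node l z R -> a \in nodes l -> b \in nodes R ->
  has (anc t a) F -> has (anc t b) F -> anc t w z -> w != z -> pseudo t F z.
Proof.
move=> H tr rF E al bR Ha Hb wz nwz.
case: (sub_Some E) => zt _.
case: l E al => [|l1 cl l2] // E al; case: R E bR => [|r1 cr r2] // E bR.
have clin : cl \in nodes (Node l1 cl l2) by rewrite nodesN eqxx.
have crin : cr \in nodes (Node r1 cr r2) by rewrite nodesN eqxx.
have Hcl : has (anc t cl) F.
  case/hasP: Ha => f fF af; apply/hasP; exists f => //; apply: (anc_trans H _ af).
  by rewrite (anc_subtree_l _ H E clin); apply: anc_top.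
have Hcr : has (anc t cr) F.
  case/hasP: Hb => f fF af; apply/hasP; exists f => //; apply: (anc_trans H _ af).
  by rewrite (anc_subtree_r _ H E crin); apply: anc_top.
have zr : z != r.
  apply/eqP=> e; subst z; move: tr.
  case: t H E zt wz {Ha Hb Hcl Hcr} => // tl k tr' H E zt wz /= [ek].
  by subst k; rewrite (anc_to_top H wz) eqxx in nwz.
case: (parent_exists H tr zt zr) => p zp.
case: (parent_imm H zp) => _ apz _.
have azcl : anc t z cl by rewrite (anc_subtree_top _ E) !nodesN (eqxx cl) !orbT.
have Hp : has (anc t p) F.
  case/hasP: Hcl => f fF af; apply/hasP; exists f => //; apply: (anc_trans H apz).
  exact: anc_trans H azcl af.
rewrite /pseudo zt /= (steinerE _ H tr rF).
rewrite (deg3 H (fun u => @steinerE t F r u H tr rF) E zp Hcl Hcr Hp) eqxx andbT orbC /=.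
case/hasP: Hcl => f fF af; apply/orP; left; apply/hasP; exists f => //; exact: anc_trans H azcl af.
Qed.

Lemma tendon_between t F x y z : tendon_ok t F x y -> z \in nodes t ->
  sanc t x z -> sanc t z y -> ~~ pseudo t F z.
Proof.
case/and4P=> _ _ _ /allP h zt xz zy.
by move: (h z zt); rewrite xz zy.
Qed.

Lemma mem_half t x y b z : (z \in Defs.half t x y b) =
  [&& z \in nodes t, sanc t x z, sanc t z y & (if b then z < y else y < z)].
Proof.
rewrite /Defs.half /tendon !mem_filter.
by case: (z \in nodes t); case: (sanc t x z); case: (sanc t z y); case: (if b then _ else _).
Qed.

Lemma foldr_min_mem (x0 : nat) s : foldr minn x0 s \in x0 :: s.
Proof.
elim: s => [|a s IH] /=; first by rewrite in_cons eqxx.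
rewrite /minn; case: ifP => _; first by rewrite !in_cons eqxx orbT.
by move: IH; rewrite !in_cons => /orP[->|->]; rewrite ?orbT.
Qed.

Lemma foldr_min_le (x0 : nat) s x : x \in x0 :: s -> foldr minn x0 s <= x.
Proof.
elim: s x => [|a s IH] x /=; first by rewrite in_cons in_nil orbF => /eqP->.
rewrite !in_cons => /or3P[/eqP->|/eqP->|xs].
- by rewrite geq_min IH ?in_cons ?eqxx ?orbT.
- by rewrite geq_min leqnn.
- by rewrite geq_min IH ?in_cons ?xs ?orbT.
Qed.

Lemma foldr_max_mem s : s != [::] -> foldr maxn 0 s \in s.
Proof.
elim: s => [|a s IH] //= _.
case: s IH => [|b s] IH /=; first by rewrite maxn0 in_cons eqxx.
rewrite /maxn; case: ifP => _; last by rewrite in_cons eqxx.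
by rewrite in_cons IH ?orbT.
Qed.

Lemma foldr_max_ge s x : x \in s -> x <= foldr maxn 0 s.
Proof.
elim: s x => [|a s IH] x //=; rewrite in_cons => /orP[/eqP->|xs].
  by rewrite leq_max leqnn.
by rewrite leq_max IH ?orbT.
Qed.

Lemma aux1 M y k : M < y -> k <= M -> (M < y) = (M < k) -> False. Proof. lia. Qed.
Lemma aux2 m y k : y < m -> m <= k -> (m < y) = (m < k) -> k = m. Proof. lia. Qed.
Lemma aux3 M y k : k <= M -> M < y -> k < y. Proof. lia. Qed.
Lemma aux4 m y k : y < m -> m <= k -> y < k. Proof. lia. Qed.
Lemma aux5 z y : y < z -> y != z. Proof. lia. Qed.
Lemma aux6 z y : z < y -> y != z. Proof. lia. Qed.

Lemma foldr_min_mem' s : s != [::] -> foldr minn (head 0 s) s \in s.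
Proof.
case: s => [|a s'] // _ /=.
have := foldr_min_mem a (a :: s'); rewrite /= in_cons => /orP[/eqP->|//].
by rewrite in_cons eqxx.
Qed.

Lemma half_closed t F r x y b k : bst t -> troot t = Some r -> r \in F ->
  tendon_ok t F x y -> Defs.half t x y b != [::] ->
  k \in nodes t -> has (anc t k) F ->
  foldr minn (head 0 (Defs.half t x y b)) (Defs.half t x y b) <= k <=
    foldr maxn 0 (Defs.half t x y b) ->
  k \in Defs.half t x y b.
Proof.
move=> H tr rF tok sn kt kF.
set s := Defs.half t x y b in sn *.
set m := foldr minn _ s; set M := foldr maxn 0 s.
have ms : m \in s by apply: foldr_min_mem'.
have Ms : M \in s by apply: foldr_max_mem.
have /and4P[mt xm my cm] : [&& m \in nodes t, sanc t x m, sanc t m y & (if b then m < y else y < m)]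
  by rewrite -mem_half.
have /and4P[Mt xM My cM] : [&& M \in nodes t, sanc t x M, sanc t M y & (if b then M < y else y < M)]
  by rewrite -mem_half.
case/andP: my => amy nmy; case/andP: My => aMy nMy.
case/andP=> mk kM.
have Hy : has (anc t y) F by case/and4P: tok => _ py _ _; apply: (pseudo_S H tr rF py).
have kcond : if b then k < y else y < k.
  by case: (b) cm cM => /= cm cM; [apply: aux3 kM cM | apply: aux4 cm mk].
have key : forall a, a \in s -> anc t a k -> k \in s.
  move=> a; rewrite /s mem_half => /and4P[a_t xa /andP[ay nay] ca] ak.
  case/andP: xa => xa nxa.
  case: (branchT H ak ay) => [ky|[yk|[z [l [R [az [E hs]]]]]]].
  - rewrite /s mem_half kt kcond andbT.
    have nky : k != y.
      by case: (b) kcond => /= h; [apply: aux5 | apply: aux6].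
    rewrite /sanc ky nky (anc_trans H xa ak) /= !andbT.
    by apply/eqP=> e; case: (chain_eq H xa ak e) => e1 _; rewrite e1 eqxx in nxa.
  - have km : k = m.
      case: (b) cm cM kcond => /= cm cM _.
        by case: (aux1 cM kM (anc_side H aMy nMy yk)).
      exact: (aux2 cm mk (anc_side H amy nmy yk)).
    by rewrite km.
  - exfalso.
    have Hs : bst (Node l z R) by rewrite -E; apply: bst_sub.
    have xz : anc t x z by apply: anc_trans H xa az.
    have nxz : x != z.
      by apply/eqP=> e; case: (chain_eq H xa az e) => e1 _; rewrite e1 eqxx in nxa.
    have pz : pseudo t F z.
      case: hs => /andP[kl yR].
        exact: (branch_pseudo H tr rF E kl yR kF Hy xz nxz).
      exact: (branch_pseudo H tr rF E yR kl Hy kF xz nxz).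
    have zy : anc t z y.
      by rewrite (anc_subtree_top _ E) nodesN; case: hs => /andP[_ ->]; rewrite ?orbT.
    have nzy : z != y.
      rewrite eq_sym; case: hs => /andP[_ yR].
        by apply: aux6; apply: (bst_gt Hs yR).
      by apply: aux5; apply: (bst_lt Hs yR).
    have zt : z \in nodes t by case/andP: (anc_in zy).
    move: (tendon_between tok zt); rewrite /sanc xz nxz zy nzy /= => /(_ erefl erefl).
    by rewrite pz.
case/orP: (anc_total H amy aMy) => h.
  by apply: (key m ms); apply: (anc_contig H h) => //; rewrite mk kM.
by apply: (key M Ms); apply: (anc_contig H h) => //; rewrite mk kM orbT.
Qed.

Lemma sanc_anc t x a k : bst t -> sanc t x a -> anc t a k -> sanc t x k.
Proof.
move=> H /andP[xa nxa] ak; rewrite /sanc (anc_trans H xa ak) /=.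
by apply/eqP=> e; case: (chain_eq H xa ak e) => e1 _; rewrite e1 eqxx in nxa.
Qed.

Lemma anc_sanc t x a k : bst t -> anc t x a -> sanc t a k -> sanc t x k.
Proof.
move=> H xa /andP[ak nak]; rewrite /sanc (anc_trans H xa ak) /=.
by apply/eqP=> e; case: (chain_eq H xa ak e) => _ e1; rewrite e1 eqxx in nak.
Qed.

Lemma sanc_in t x y : sanc t x y -> (x \in nodes t) && (y \in nodes t).
Proof. by case/andP=> /anc_in. Qed.

Lemma tok_pseudo t F x y : tendon_ok t F x y -> pseudo t F x /\ pseudo t F y.
Proof. by case/and4P. Qed.

Lemma nodes_disj t F r e1 e2 z : bst t -> troot t = Some r -> r \in F ->
  in_hand t F e1 -> in_hand t F e2 -> z \in elt_nodes t e1 -> z \in elt_nodes t e2 -> e1 = e2.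
Proof.
move=> H tr rF.
case: e1 => [f|x y b]; case: e2 => [g|x' y' b'] /=.
- by move=> _ _; rewrite !in_cons !in_nil !orbF => /eqP-> /eqP->.
- move=> pf /andP[tok _]; rewrite in_cons in_nil orbF => /eqP->.
  rewrite mem_half => /and4P[ft xf fy _].
  by move: (tendon_between tok ft xf fy); rewrite pf.
- move=> /andP[tok _] pf zh; rewrite in_cons in_nil orbF => /eqP ez; subst g.
  move: zh; rewrite mem_half => /and4P[ft xf fy _].
  by move: (tendon_between tok ft xf fy); rewrite pf.
move=> /andP[tok1 _] /andP[tok2 _].
rewrite !mem_half => /and4P[zt xz zy cz] /and4P[_ x'z zy' cz'].
case: (tok_pseudo tok1) => px py; case: (tok_pseudo tok2) => px' py'.
have Hy : has (anc t y) F by apply: (pseudo_S H tr rF py).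
have Hy' : has (anc t y') F by apply: (pseudo_S H tr rF py').
have [eyy|nyy] := eqVneq y y'.
  subst y'.
  have exx : x = x'.
    case/andP: (xz) => axz _; case/andP: (x'z) => ax'z _.
    have [//|nxx] := eqVneq x x'.
    case/orP: (anc_total H axz ax'z) => a.
      have x't : x' \in nodes t by case/andP: (anc_in a).
      have := tendon_between tok1 x't; rewrite {1}/sanc a nxx.
      by move=> /(_ erefl (sanc_anc H x'z (proj1 (andP zy)))); rewrite px'.
    have xt : x \in nodes t by case/andP: (anc_in a).
    have := tendon_between tok2 xt; rewrite {1}/sanc a eq_sym nxx.
    by move=> /(_ erefl (sanc_anc H xz (proj1 (andP zy)))); rewrite px.
  subst x'; case: b b' cz cz' => -[] //= h1 h2; case: (lt_asym h1 h2).
exfalso.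
case: (branchT H (proj1 (andP zy)) (proj1 (andP zy'))) => [ayy|[ayy|[z0 [l [R [az [E hs]]]]]]].
- have yt : y \in nodes t by case/andP: (anc_in ayy).
  move: (tendon_between tok2 yt (sanc_anc H x'z (proj1 (andP zy)))).
  by rewrite {1}/sanc ayy nyy py => /(_ erefl).
- have yt : y' \in nodes t by case/andP: (anc_in ayy).
  move: (tendon_between tok1 yt (sanc_anc H xz (proj1 (andP zy')))).
  by rewrite {1}/sanc ayy eq_sym nyy py' => /(_ erefl).
- have Hs : bst (Node l z0 R) by rewrite -E; apply: bst_sub.
  have xz0 : sanc t x z0 by apply: sanc_anc H xz az.
  have pz : pseudo t F z0.
    case/andP: (xz0) => axz0 nxz0.
    case: hs => /andP[kl yR].
      exact: (branch_pseudo H tr rF E kl yR Hy Hy' axz0 nxz0).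
    exact: (branch_pseudo H tr rF E yR kl Hy' Hy axz0 nxz0).
  have z0y : anc t z0 y.
    by rewrite (anc_subtree_top _ E) nodesN; case: hs => /andP[-> _]; rewrite ?orbT.
  have nzy : z0 != y.
    rewrite eq_sym; case: hs => /andP[yl _].
      by apply: aux5; apply: (bst_lt Hs yl).
    by apply: aux6; apply: (bst_gt Hs yl).
  have zt0 : z0 \in nodes t by case/andP: (anc_in z0y).
  by move: (tendon_between tok1 zt0 xz0); rewrite /sanc z0y nzy pz => /(_ erefl).
Qed.

Lemma elt_good t F r e : bst t -> troot t = Some r -> r \in F -> in_hand t F e ->
  [/\ (interval t e).1 \in elt_nodes t e, (interval t e).2 \in elt_nodes t e,
      {subset elt_nodes t e <= nodes t},
      (forall z, z \in elt_nodes t e -> has (anc t z) F) &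
      forall k, k \in nodes t -> has (anc t k) F ->
        (interval t e).1 <= k <= (interval t e).2 -> k \in elt_nodes t e].
Proof.
move=> H tr rF; case: e => [f|x y b] /=.
  move=> pf; have ft : f \in nodes t by case/andP: pf.
  rewrite minnn maxn0 !in_cons eqxx /=; split => //.
  - by move=> z; rewrite in_cons in_nil orbF => /eqP->.
  - by move=> z; rewrite in_cons in_nil orbF => /eqP->; apply: (pseudo_S H tr rF pf).
  - by move=> k _ _; rewrite -eqn_leq eq_sym in_cons => ->.
move=> /andP[tok sn]; split.
- exact: foldr_min_mem'.
- exact: foldr_max_mem.
- by move=> z; rewrite mem_half => /andP[].
- move=> z; rewrite mem_half => /and4P[_ _ /andP[zy _] _].
  case: (tok_pseudo tok) => _ py; case/hasP: (pseudo_S H tr rF py) => f fF yf.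
  by apply/hasP; exists f => //; apply: (anc_trans H zy yf).
- by move=> k kt kF kk; apply: (half_closed H tr rF tok sn kt kF kk).
Qed.

Theorem lemma15 (t : tree) (F : seq nat) :
  bst t ->
  {subset F <= nodes t} ->
  (exists2 r, troot t = Some r & r \in F) ->
  forall e1 e2 : hand_elt,
    in_hand t F e1 -> in_hand t F e2 -> e1 <> e2 ->
    disjoint_iv (interval t e1) (interval t e2).
Proof.
move=> H _ [r tr rF] e1 e2 h1 h2 ne.
case: (elt_good H tr rF h1) => a1 a2 s1 S1 c1.
case: (elt_good H tr rF h2) => b1 b2 s2 S2 c2.
rewrite /disjoint_iv; apply/contraT; rewrite negb_or -!leqNgt => /andP[hab hba].
case: (leqP (interval t e1).1 (interval t e2).1) => h.
  have k1 := c1 _ (s2 _ b1) (S2 _ b1) (introT andP (conj h hab)).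
  by case: (ne (nodes_disj H tr rF h1 h2 k1 b1)).
have k2 := c2 _ (s1 _ a1) (S1 _ a1) (introT andP (conj (ltnW h) hba)).
by case: (ne (nodes_disj H tr rF h1 h2 a1 k2)).
Qed.
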